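(* Let $V:S^1\to\mathbb R$ be continuous and odd, $D>0$, and let $f\ge0$ be a ($\mathcal C^2$) stationary solution of (TP) with $\int_{S^1}f=1$. Then $f$ satisfies $D f'=-(V*f)f$ on $S^1$. With $C=\max V/D$, for all $\theta_1,\theta_2\in S^1$, $$f(\theta_1)e^{-C|\theta_1-\theta_2|}\le f(\theta_2)\le f(\theta_1)e^{C|\theta_1-\theta_2|},$$ where $|\theta_1-\theta_2|\le\tfrac12$ is the distance on $S^1$. Consequently $\max f/\min f\le e^{C/2}$, $\max f\le e^{C/2}$ and $\min f\ge e^{-C/2}$. If moreover $V\in\mathcal C^1$, then at any maximum point $\theta_{\max}$ of $f$, $f''(\theta_{\max})\ge-\frac{\max V'}{D}f(\theta_{\max})$, and at any minimum point $\theta_{\min}$, $f''(\theta_{\min})\le-\frac{\min V'}{D}f(\theta_{\min})$.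
   Context: $S^1=\mathbb R/\mathbb Z$; $(V*f)(\theta)=\int_{S^1}V(\theta-\psi)f(\psi)d\psi$. Equation (TP): $\partial_tf=D\partial_\theta^2f+\partial_\theta((V*f)f)$. A stationary solution is a time-independent solution, i.e. $Df''+((V*f)f)'=0$. *)

(* Defs.v *)
From Stdlib Require Import Reals Lra ClassicalEpsilon.
Open Scope R_scope.

(* Functions on S^1 = R/Z are represented as 1-periodic functions R -> R. *)
Definition periodic1 (g : R -> R) : Prop := forall x, g (x + 1) = g x.

(* Integral over S^1 (i.e. over [0,1]); the Riemann integral when it exists,
   0 otherwise (it always exists for the continuous integrands used here). *)
Definition int_S1 (g : R -> R) : R :=
  match excluded_middle_informative (exists pr : Riemann_integrable g 0 1, True) with
  | left H => RiemannInt (proj1_sig (constructive_indefinite_description _ H))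
  | right _ => 0
  end.

Definition conv (V f : R -> R) (theta : R) : R :=
  int_S1 (fun psi => V (theta - psi) * f psi).

Definition dist_S1 (x y : R) : R :=
  Rmin (frac_part (x - y)) (1 - frac_part (x - y)).

Definition is_max_val (g : R -> R) (M : R) : Prop :=
  (forall x, g x <= M) /\ exists x0, g x0 = M.
Definition is_min_val (g : R -> R) (m : R) : Prop :=
  (forall x, m <= g x) /\ exists x0, g x0 = m.

(* Main.v *)
Require Import Defs.
From Stdlib Require Import Reals Lra Lia ZArith ClassicalEpsilon.
From Coquelicot Require Import Coquelicot.
Open Scope R_scope.

Lemma cont_ex_RInt (g : R -> R) a b :
  (forall x, continuity_pt g x) -> ex_RInt g a b.
Proof.
  intros Hg. apply (ex_RInt_continuous (V := R_CompleteNormedModule)). intros z _.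
  apply continuity_pt_filterlim. apply Hg.
Qed.

Lemma RInt_minus' (f g : R -> R) a b :
  ex_RInt f a b -> ex_RInt g a b ->
  RInt (fun x => f x - g x) a b = RInt f a b - RInt g a b.
Proof. intros. apply (RInt_minus (V := R_CompleteNormedModule) f g a b); auto. Qed.

Lemma RInt_ext' (f g : R -> R) a b :
  (forall x, Rmin a b < x < Rmax a b -> f x = g x) -> RInt f a b = RInt g a b.
Proof. intros. apply (RInt_ext (V := R_CompleteNormedModule)); auto. Qed.

Lemma m1_mul (x : R) : -1 * x = - x.
Proof. ring. Qed.

Lemma RInt_scal' (f : R -> R) a b l :
  ex_RInt f a b -> RInt (fun x => l * f x) a b = l * RInt f a b.
Proof. intros. apply (RInt_scal (V := R_CompleteNormedModule) f a b l); auto. Qed.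

Lemma cont2d_1 (K : R -> R -> R) x y :
  continuity_2d_pt K x y -> continuity_pt (fun t => K t y) x.
Proof.
  intros HK.
  unfold continuity_pt, continue_in, limit1_in, limit_in; simpl; unfold R_dist.
  intros eps Heps. destruct (HK (mkposreal _ Heps)) as [d Hd].
  exists d. split. apply cond_pos. intros u [_ Hu].
  apply (Hd u y Hu). rewrite Rminus_diag, Rabs_R0. apply cond_pos.
Qed.

Lemma cont2d_2 (K : R -> R -> R) x y :
  continuity_2d_pt K x y -> continuity_pt (fun t => K x t) y.
Proof.
  intros HK.
  unfold continuity_pt, continue_in, limit1_in, limit_in; simpl; unfold R_dist.
  intros eps Heps. destruct (HK (mkposreal _ Heps)) as [d Hd].
  exists d. split. apply cond_pos. intros u [_ Hu].
  apply (Hd x u). rewrite Rminus_diag, Rabs_R0. apply cond_pos. exact Hu.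
Qed.

Lemma cont_param (K : R -> R -> R) a b y0 :
  (forall x y, continuity_2d_pt K x y) ->
  continuity_pt (fun y => RInt (fun t => K t y) a b) y0.
Proof.
  intros HK.
  unfold continuity_pt, continue_in, limit1_in, limit_in; simpl; unfold R_dist.
  intros eps Heps.
  set (e' := eps / (Rabs (b - a) + 1)).
  assert (He' : 0 < e').
  { unfold e'. apply Rdiv_lt_0_compat; auto. pose proof (Rabs_pos (b-a)); lra. }
  destruct (uniform_continuity_2d K (Rmin a b) (Rmax a b) (y0 - 1) (y0 + 1)
     (fun x y _ _ => HK x y) (mkposreal _ He')) as [delta Hd].
  exists (Rmin delta 1). split.
  { apply Rmin_pos; [apply cond_pos | lra]. }
  intros y [_ Hy].
  assert (Hy1 : Rabs (y - y0) < delta) by (eapply Rlt_le_trans; [exact Hy| apply Rmin_l]).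
  assert (Hy2 : Rabs (y - y0) < 1) by (eapply Rlt_le_trans; [exact Hy| apply Rmin_r]).
  assert (Hc : forall y, ex_RInt (fun t => K t y) a b).
  { intros y'. apply cont_ex_RInt. intros z. apply cont2d_1. apply HK. }
  rewrite <- RInt_minus' by auto.
  assert (Hn := norm_RInt_le_const_abs (V := R_NormedModule) (fun t => K t y - K t y0) a b
            (RInt (fun t => K t y - K t y0) a b) e').
  simpl in Hn. unfold norm in Hn; simpl in Hn; unfold abs in Hn; simpl in Hn.
  eapply Rle_lt_trans. apply Hn.
  - intros x Hx. apply Rlt_le. apply (Hd x y0 x y).
    + lra.
    + split; lra.
    + lra.
    + apply Rabs_lt_between' in Hy2. lra.
    + rewrite Rminus_diag, Rabs_R0. apply cond_pos.
    + exact Hy1.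
  - apply (RInt_correct (V := R_CompleteNormedModule)). apply (ex_RInt_minus (V := R_NormedModule)); auto.
  - unfold e'. pose proof (Rabs_pos (b-a)).
    apply Rlt_le_trans with ((Rabs (b - a) + 1) * (eps / (Rabs (b - a) + 1))).
    apply Rmult_lt_compat_r. apply Rdiv_lt_0_compat; lra. lra.
    right. field. lra.
Qed.

Lemma cont2d_swap (K : R -> R -> R) x y :
  continuity_2d_pt K x y -> continuity_2d_pt (fun u v => K v u) y x.
Proof.
  intros HK eps. destruct (HK eps) as [d Hd]. exists d. intros u v Hu Hv.
  apply Hd; auto.
Qed.

Lemma RInt_zero0 a b : RInt (fun _ => 0) a b = 0.
Proof.
  rewrite (RInt_const (V := R_CompleteNormedModule)). simpl.
  unfold scal; simpl; unfold mult; simpl. ring.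
Qed.

Lemma RInt_pt0 (g : R -> R) a : RInt g a a = 0.
Proof. apply (RInt_point (V := R_CompleteNormedModule)). Qed.

Lemma fubini01 (K : R -> R -> R) :
  (forall x y, continuity_2d_pt K x y) ->
  RInt (fun x => RInt (fun t => K x t) 0 1) 0 1 =
  RInt (fun t => RInt (fun x => K x t) 0 1) 0 1.
Proof.
  intros HK.
  set (Phi := fun u => RInt (fun t => K u t) 0 1).
  assert (HPc : forall u, continuity_pt Phi u).
  { intros u. unfold Phi. apply (cont_param (fun t u => K u t)).
    intros x y. apply cont2d_swap. apply HK. }
  set (G := fun u => RInt Phi 0 u).
  assert (HG : forall u, is_derive G u (Phi u)).
  { intros u. apply (is_derive_RInt (V := R_NormedModule) Phi G 0 u).
    - apply filter_forall. intros b0. apply (RInt_correct (V := R_CompleteNormedModule)).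
      apply cont_ex_RInt. exact HPc.
    - apply continuity_pt_filterlim. apply HPc. }
  set (P := fun u t => RInt (fun x => K x t) 0 u).
  assert (HP : forall u t, is_derive (fun z => P z t) u (K u t)).
  { intros u t. unfold P. apply (is_derive_RInt (V := R_NormedModule) (fun x => K x t) (fun z => RInt (fun x => K x t) 0 z) 0 u).
    - apply filter_forall. intros b0. apply (RInt_correct (V := R_CompleteNormedModule)).
      apply cont_ex_RInt. intros x. apply cont2d_1. apply HK.
    - apply continuity_pt_filterlim. apply cont2d_1. apply HK. }
  set (F := fun u => RInt (fun t => P u t) 0 1).
  assert (HF : forall u, is_derive F u (Phi u)).
  { intros u.
    assert (E : Phi u = RInt (fun t => Derive (fun z => P z t) u) 0 1).
    { unfold Phi. apply RInt_ext. intros t _. symmetry. apply is_derive_unique. apply HP. }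
    rewrite E. unfold F.
    apply (is_derive_RInt_param P 0 1 u).
    - apply filter_forall. intros x0 t _. eexists. apply HP.
    - intros t _. apply continuity_2d_pt_ext with (f := K).
      + intros x y. symmetry. apply is_derive_unique. apply HP.
      + apply HK.
    - apply filter_forall. intros y. apply cont_ex_RInt. intros t. unfold P.
      apply cont_param. exact HK. }
  assert (HH : forall u, is_derive (fun u => F u - G u) u 0).
  { intros u. apply is_derive_Reals.
    replace 0 with (Phi u - Phi u) by ring.
    apply derivable_pt_lim_minus; apply is_derive_Reals; auto. }
  destruct (MVT_gen (fun u => F u - G u) 0 1 (fun _ => 0)) as [c [_ Hc]].
  - intros; apply HH.
  - intros x _. apply derivable_continuous_pt. exists 0. apply is_derive_Reals, HH.
  - assert (F0 : F 0 = 0).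
    { unfold F, P. transitivity (RInt (fun _ : R => 0) 0 1).
      apply RInt_ext. intros; apply RInt_pt0. apply RInt_zero0. }
    assert (G0 : G 0 = 0) by (unfold G; apply RInt_pt0).
    rewrite F0, G0 in Hc.
    assert (F 1 = G 1) by lra.
    unfold F, G, P, Phi in H. rewrite H. reflexivity.
Qed.
Lemma int_S1_RInt (g : R -> R) : (forall x, continuity_pt g x) -> int_S1 g = RInt g 0 1.
Proof.
  intros Hg. unfold int_S1.
  destruct excluded_middle_informative as [H|H].
  - destruct (constructive_indefinite_description _ H) as [pr Hpr]. simpl.
    symmetry. apply RInt_Reals.
  - exfalso. apply H. exists (continuity_implies_RiemannInt (Rle_0_1) (fun x _ => Hg x)). auto.
Qed.
Lemma dexp c t : derivable_pt_lim (fun t => exp (c * t)) t (exp (c * t) * c).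
Proof.
  apply (derivable_pt_lim_comp (fun t => c * t) exp t c (exp (c*t))).
  - pose proof (derivable_pt_lim_scal id c t 1 (derivable_pt_lim_id t)) as H.
    unfold mult_real_fct, id in H. rewrite Rmult_1_r in H. exact H.
  - apply derivable_pt_lim_exp.
Qed.

Lemma gronwall_ord (f f1 : R -> R) (C : R) :
  (forall x, derivable_pt_lim f x (f1 x)) ->
  (forall x, f1 x <= C * f x) -> (forall x, - (C * f x) <= f1 x) ->
  forall a b, a <= b -> f b <= f a * exp (C * (b - a)) /\ f a <= f b * exp (C * (b - a)).
Proof.
  intros Hd Hu Hl a b Hab.
  assert (Hc : forall x, continuity_pt f x).
  { intros x. apply derivable_continuous_pt. exists (f1 x). apply Hd. }
  split.
  - destruct (MVT_gen (fun t => f t * exp ((-C) * t)) a b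
      (fun t => f1 t * exp ((-C) * t) + f t * (exp ((-C) * t) * (-C)))) as [c [_ Hm]].
    + intros x _. apply is_derive_Reals. apply (derivable_pt_lim_mult f (fun t => exp (_ * t))); [apply Hd | apply dexp].
    + intros x _. apply continuity_pt_mult; [apply Hc|].
      apply derivable_continuous_pt. eexists. apply dexp.
    + assert (Hle : f b * exp (-C * b) <= f a * exp (- C * a)).
      { assert (0 <= exp (-C*c)) by (apply Rlt_le, exp_pos).
        assert ((f1 c * exp (- C * c) + f c * (exp (- C * c) * - C)) <= 0).
        { specialize (Hu c). nra. }
        nra. }
      apply Rmult_le_compat_r with (r := exp (C * b)) in Hle; [|apply Rlt_le, exp_pos].
      rewrite !Rmult_assoc, <- !exp_plus in Hle.
      replace (-C * b + C * b) with 0 in Hle by ring. rewrite exp_0 in Hle.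
      replace (-C * a + C * b) with (C * (b - a)) in Hle by ring. lra.
  - destruct (MVT_gen (fun t => f t * exp (C * t)) a b
      (fun t => f1 t * exp (C * t) + f t * (exp (C * t) * C))) as [c [_ Hm]].
    + intros x _. apply is_derive_Reals. apply (derivable_pt_lim_mult f (fun t => exp (_ * t))); [apply Hd | apply dexp].
    + intros x _. apply continuity_pt_mult; [apply Hc|].
      apply derivable_continuous_pt. eexists. apply dexp.
    + assert (Hle : f a * exp (C * a) <= f b * exp (C * b)).
      { assert (0 <= exp (C*c)) by (apply Rlt_le, exp_pos).
        assert (0 <= (f1 c * exp (C * c) + f c * (exp (C * c) * C))).
        { specialize (Hl c). nra. }
        nra. }
      apply Rmult_le_compat_r with (r := exp (- C * a)) in Hle; [|apply Rlt_le, exp_pos].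
      rewrite !Rmult_assoc, <- !exp_plus in Hle.
      replace (C * a + - C * a) with 0 in Hle by ring. rewrite exp_0 in Hle.
      replace (C * b + - C * a) with (C * (b - a)) in Hle by ring. lra.
Qed.

Lemma gronwall (f f1 : R -> R) (C : R) :
  (forall x, derivable_pt_lim f x (f1 x)) ->
  (forall x, f1 x <= C * f x) -> (forall x, - (C * f x) <= f1 x) ->
  forall a b, f b <= f a * exp (C * Rabs (b - a)) /\ f a <= f b * exp (C * Rabs (b - a)).
Proof.
  intros Hd Hu Hl a b.
  destruct (Rle_dec a b) as [H|H].
  - rewrite Rabs_right by lra. apply (gronwall_ord f f1 C); auto.
  - rewrite Rabs_left by lra. replace (- (b - a)) with (a - b) by ring.
    destruct (gronwall_ord f f1 C Hd Hu Hl b a) as [H1 H2]; [lra|]. auto.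
Qed.

Lemma periodic_nat (f : R -> R) : periodic1 f -> forall n x, f (x + INR n) = f x.
Proof.
  intros Hp n. induction n as [|n IH]; intros x.
  - simpl. f_equal. ring.
  - rewrite S_INR. replace (x + (INR n + 1)) with ((x + INR n) + 1) by ring.
    rewrite Hp. apply IH.
Qed.

Lemma periodic_Z (f : R -> R) : periodic1 f -> forall k x, f (x + IZR k) = f x.
Proof.
  intros Hp k x.
  destruct (Z_le_gt_dec 0%Z k) as [H|H].
  - rewrite <- (Z2Nat.id k H). rewrite <- INR_IZR_INZ. apply periodic_nat; auto.
  - assert (E : k = (- Z.of_nat (Z.to_nat (- k)))%Z) by lia.
    rewrite E, opp_IZR, <- INR_IZR_INZ.
    rewrite <- (periodic_nat f Hp (Z.to_nat (-k)) (x + - INR (Z.to_nat (- k)))).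
    f_equal. ring.
Qed.

Lemma dist_bound (f : R -> R) (C : R) :
  periodic1 f ->
  (forall a b, f b <= f a * exp (C * Rabs (b - a)) /\ f a <= f b * exp (C * Rabs (b - a))) ->
  forall t1 t2, f t2 <= f t1 * exp (C * dist_S1 t1 t2) /\ f t1 <= f t2 * exp (C * dist_S1 t1 t2).
Proof.
  intros Hp HG t1 t2.
  destruct (base_fp (t1 - t2)) as [F0 F1].
  assert (Efr : frac_part (t1 - t2) = (t1 - t2) - IZR (Int_part (t1 - t2))) by reflexivity.
  unfold dist_S1. unfold Rmin. destruct Rle_dec as [Hm|Hm].
  - rewrite <- (periodic_Z f Hp (Int_part (t1 - t2)) t2).
    replace (frac_part (t1 - t2)) with (Rabs ((t2 + IZR (Int_part (t1 - t2))) - t1)).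
    apply HG. rewrite Rabs_left1 by lra. lra.
  - rewrite <- (periodic_Z f Hp (Int_part (t1 - t2) + 1) t2).
    replace (1 - frac_part (t1 - t2)) with (Rabs ((t2 + IZR (Int_part (t1 - t2) + 1)) - t1)).
    apply HG. rewrite plus_IZR. rewrite Rabs_right by lra. lra.
Qed.

Lemma dist_le_half t1 t2 : 0 <= dist_S1 t1 t2 <= 1/2.
Proof.
  destruct (base_fp (t1 - t2)) as [F0 F1]. unfold dist_S1, Rmin.
  destruct Rle_dec; lra.
Qed.

Lemma deriv_nonneg (g : R -> R) x l :
  derivable_pt_lim g x l -> g x = 0 -> (forall t, x < t -> 0 <= g t) -> 0 <= l.
Proof.
  intros Hd H0 Hpos. destruct (Rle_dec 0 l) as [|Hl]; auto. exfalso.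
  destruct (Hd (- l)) as [d Hdd]; [lra|].
  assert (Hdp := cond_pos d).
  specialize (Hdd (d / 2)).
  assert (Hne : d / 2 <> 0) by lra.
  assert (Hab : Rabs (d / 2) < d) by (rewrite Rabs_right; lra).
  specialize (Hdd Hne Hab). rewrite H0 in Hdd.
  assert (Hq : 0 <= (g (x + d / 2) - 0) / (d / 2)).
  { apply Rmult_le_pos. assert (0 <= g (x + d/2)) by (apply Hpos; lra). lra.
    apply Rlt_le, Rinv_0_lt_compat; lra. }
  apply Rabs_lt_between' in Hdd. lra.
Qed.
Theorem mainTheorem10
  (V : R -> R) (D : R) (f f1 f2 h : R -> R)
  (HVc : continuity V) (HVp : periodic1 V) (HVodd : forall x, V (- x) = - V x)
  (HD : 0 < D)
  (Hfp : periodic1 f)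
  (Hf1 : forall x, derivable_pt_lim f x (f1 x))
  (Hf2 : forall x, derivable_pt_lim f1 x (f2 x))
  (Hf2c : continuity f2)
  (Hfnn : forall x, 0 <= f x)
  (Hmass : int_S1 f = 1)
  (Hh : forall x, derivable_pt_lim (fun t => conv V f t * f t) x (h x))
  (Hstat : forall x, D * f2 x + h x = 0) :
  (forall x, D * f1 x = - (conv V f x * f x)) /\
  (forall MV, is_max_val V MV ->
     let C := MV / D in
     (forall t1 t2,
        f t1 * exp (- C * dist_S1 t1 t2) <= f t2 /\
        f t2 <= f t1 * exp (C * dist_S1 t1 t2)) /\
     (forall Mf mf, is_max_val f Mf -> is_min_val f mf ->
        Mf / mf <= exp (C / 2) /\ Mf <= exp (C / 2) /\ exp (- C / 2) <= mf)) /\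
  (forall V1 : R -> R,
     (forall x, derivable_pt_lim V x (V1 x)) -> continuity V1 ->
     forall MV1 mV1, is_max_val V1 MV1 -> is_min_val V1 mV1 ->
     (forall tmax, (forall x, f x <= f tmax) -> - (MV1 / D) * f tmax <= f2 tmax) /\
     (forall tmin, (forall x, f tmin <= f x) -> f2 tmin <= - (mV1 / D) * f tmin)).
Proof.
  assert (fc : forall x, continuity_pt f x).
  { intros x. apply derivable_continuous_pt. exists (f1 x). apply Hf1. }
  assert (f1c : forall x, continuity_pt f1 x).
  { intros x. apply derivable_continuous_pt. exists (f2 x). apply Hf2. }
  assert (K2c : forall x y, continuity_2d_pt (fun u v => V (u - v) * f v) x y).
  { intros x y. apply continuity_2d_pt_mult.
    - apply (continuity_1d_2d_pt_comp V (fun u v => u - v)). apply HVc.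
      apply continuity_2d_pt_minus; [apply continuity_2d_pt_id1|apply continuity_2d_pt_id2].
    - apply (continuity_1d_2d_pt_comp f (fun u v => v)). apply fc. apply continuity_2d_pt_id2. }
  assert (Kic : forall x, forall psi, continuity_pt (fun psi => V (x - psi) * f psi) psi).
  { intros x psi. apply (cont2d_2 (fun u v => V (u - v) * f v)). apply K2c. }
  assert (Kex : forall x, ex_RInt (fun psi => V (x - psi) * f psi) 0 1).
  { intros x. apply cont_ex_RInt. apply Kic. }
  assert (convE : forall x, conv V f x = RInt (fun psi => V (x - psi) * f psi) 0 1).
  { intros x. unfold conv. apply int_S1_RInt. apply Kic. }
  assert (mass : RInt f 0 1 = 1) by (rewrite <- int_S1_RInt; auto).
  assert (exf : ex_RInt f 0 1) by (apply cont_ex_RInt; auto).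
  assert (Hgc : forall x, continuity_pt (fun t => conv V f t * f t) x).
  { intros x. apply derivable_continuous_pt. exists (h x). apply Hh. }
  assert (P1 : forall x, D * f1 x = - (conv V f x * f x)).
  { set (g := fun x => D * f1 x + conv V f x * f x).
    assert (Hg : forall x, derivable_pt_lim g x 0).
    { intros x. rewrite <- (Hstat x).
      apply (derivable_pt_lim_plus (fun x => D * f1 x) (fun t => conv V f t * f t)).
      - apply (derivable_pt_lim_scal f1 D x (f2 x)). apply Hf2.
      - apply Hh. }
    assert (gconst : forall x, g x = g 0).
    { intros x. destruct (MVT_gen g 0 x (fun _ => 0)) as [c [_ Hc]].
      - intros y _. apply is_derive_Reals, Hg.
      - intros y _. apply derivable_continuous_pt. exists 0. apply Hg.
      - lra. }
    set (c := g 0) in *.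
    set (I := RInt (fun x => conv V f x * f x) 0 1).
    assert (If1 : RInt f1 0 1 = 0).
    { assert (Hi := is_RInt_derive (V := R_CompleteNormedModule) f f1 0 1).
      rewrite (is_RInt_unique f1 0 1 (minus (f 1) (f 0))).
      2: { apply Hi. intros; apply is_derive_Reals, Hf1.
           intros; apply continuity_pt_filterlim, f1c. }
      unfold minus, plus, opp; simpl. specialize (Hfp 0). rewrite Rplus_0_l in Hfp.
      rewrite Hfp. apply Rplus_opp_r. }
    assert (Ic : I = c).
    { unfold I. transitivity (RInt (fun x => c - D * f1 x) 0 1).
      - apply RInt_ext'. intros x _. rewrite <- (gconst x). unfold g. ring.
      - rewrite RInt_minus'.
        + rewrite RInt_scal', If1. rewrite (RInt_const (V := R_CompleteNormedModule)).
          unfold scal; simpl; unfold mult; simpl. ring.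
          apply cont_ex_RInt; auto.
        + apply cont_ex_RInt. intros; apply continuity_pt_const. intros a b; auto.
        + apply cont_ex_RInt. intros. apply continuity_pt_scal. auto. }
    assert (Ineg : I = - I).
    { assert (HF := fubini01 (fun x t => V (x - t) * f t * f x)).
      assert (L : RInt (fun x => RInt (fun t => V (x - t) * f t * f x) 0 1) 0 1 = I).
      { unfold I. apply RInt_ext'. intros x _.
        transitivity (RInt (fun t => f x * (V (x - t) * f t)) 0 1).
        apply RInt_ext'. intros; ring.
        rewrite RInt_scal' by auto. rewrite convE. ring. }
      assert (R : RInt (fun t => RInt (fun x => V (x - t) * f t * f x) 0 1) 0 1 = - I).
      { unfold I. transitivity (RInt (fun t => (-1) * (conv V f t * f t)) 0 1).
        - apply RInt_ext'. intros t _.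
          transitivity (RInt (fun x => (- f t) * (V (t - x) * f x)) 0 1).
          apply RInt_ext'. intros x _. replace (x - t) with (- (t - x)) by ring.
          rewrite HVodd. ring.
          rewrite RInt_scal' by auto. rewrite convE. ring.
        - rewrite RInt_scal'. apply m1_mul. apply cont_ex_RInt; auto. }
      rewrite <- R. rewrite <- L. apply HF.
      intros x y. apply continuity_2d_pt_mult. apply K2c.
      apply (continuity_1d_2d_pt_comp f (fun u v => u)). apply fc. apply continuity_2d_pt_id1. }
    intros x. assert (g x = 0) by (rewrite gconst; fold c; lra).
    unfold g in H. lra. }
  split; [exact P1|].
  assert (V0 : V 0 = 0).
  { assert (H := HVodd 0). rewrite Ropp_0 in H. lra. }
  split.
  - intros MV [HVm _] C.
    assert (MV0 : 0 <= MV) by (rewrite <- V0; apply HVm).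
    assert (Vb : forall y, - MV <= V y <= MV).
    { intros y. split; [|apply HVm]. assert (H := HVm (- y)). rewrite HVodd in H. lra. }
    assert (cb : forall x, - MV <= conv V f x <= MV).
    { intros x. rewrite convE. split.
      - transitivity (RInt (fun psi => (- MV) * f psi) 0 1).
        + rewrite RInt_scal', mass by auto. lra.
        + apply RInt_le. lra. apply cont_ex_RInt. intros; apply continuity_pt_scal; auto.
          auto. intros psi _. specialize (Vb (x - psi)). specialize (Hfnn psi). nra.
      - transitivity (RInt (fun psi => MV * f psi) 0 1).
        + apply RInt_le. lra. auto. apply cont_ex_RInt. intros; apply continuity_pt_scal; auto.
          intros psi _. specialize (Vb (x - psi)). specialize (Hfnn psi). nra.
        + rewrite RInt_scal', mass by auto. lra. }
    assert (C0 : 0 <= C) by (unfold C; apply Rmult_le_pos; [lra | apply Rlt_le, Rinv_0_lt_compat; lra]).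
    assert (Hu : forall x, f1 x <= C * f x).
    { intros x. apply (Rmult_le_reg_l D); auto. rewrite P1.
      replace (D * (C * f x)) with (MV * f x) by (unfold C; field; lra).
      specialize (cb x). specialize (Hfnn x). nra. }
    assert (Hl : forall x, - (C * f x) <= f1 x).
    { intros x. apply (Rmult_le_reg_l D); auto. rewrite P1.
      replace (D * - (C * f x)) with (- (MV * f x)) by (unfold C; field; lra).
      specialize (cb x). specialize (Hfnn x). nra. }
    assert (DB := dist_bound f C Hfp (gronwall f f1 C Hf1 Hu Hl)).
    split.
    + intros t1 t2. destruct (DB t1 t2) as [A B]. split; [|exact A].
      apply Rmult_le_compat_r with (r := exp (- C * dist_S1 t1 t2)) in B; [|apply Rlt_le, exp_pos].
      rewrite Rmult_assoc, <- exp_plus in B.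
      replace (C * dist_S1 t1 t2 + - C * dist_S1 t1 t2) with 0 in B by ring.
      rewrite exp_0 in B. lra.
    + intros Mf mf [HMf [x0 Hx0]] [Hmf [x1 Hx1]].
      assert (Hd := dist_le_half x0 x1).
      assert (E1 : exp (C * dist_S1 x0 x1) <= exp (C / 2)).
      { destruct (Req_dec (C * dist_S1 x0 x1) (C / 2)) as [E|E]. rewrite E; lra.
        apply Rlt_le, exp_increasing. nra. }
      assert (Hk : Mf <= mf * exp (C / 2)).
      { destruct (DB x0 x1) as [_ B]. rewrite Hx0, Hx1 in B.
        assert (0 <= mf) by (rewrite <- Hx1; auto). nra. }
      assert (mf1 : mf <= 1).
      { rewrite <- mass. transitivity (RInt (fun _ => mf) 0 1).
        rewrite (RInt_const (V := R_CompleteNormedModule)). unfold scal; simpl; unfold mult; simpl. lra.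
        apply RInt_le. lra. apply cont_ex_RInt. intros; apply continuity_pt_const. intros a b; auto.
        auto. intros; apply Hmf. }
      assert (Mf1 : 1 <= Mf).
      { rewrite <- mass. transitivity (RInt (fun _ => Mf) 0 1).
        apply RInt_le. lra. auto. apply cont_ex_RInt. intros; apply continuity_pt_const. intros a b; auto.
        intros; apply HMf.
        rewrite (RInt_const (V := R_CompleteNormedModule)). unfold scal; simpl; unfold mult; simpl. lra. }
      assert (mf0 : 0 <= mf) by (rewrite <- Hx1; auto).
      assert (Ep := exp_pos (C / 2)).
      split; [|split].
      * destruct (Req_dec mf 0) as [Z|Z].
        -- rewrite Z. unfold Rdiv. rewrite Rinv_0, Rmult_0_r. lra.
        -- apply (Rmult_le_reg_r mf). lra. unfold Rdiv. rewrite Rmult_assoc, Rinv_l by auto. nra.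
      * nra.
      * assert (EE : exp (- C / 2) * exp (C / 2) = 1).
        { rewrite <- exp_plus. replace (- C / 2 + C / 2) with 0 by field. apply exp_0. }
        assert (Em := exp_pos (- C / 2)).
        nra.
  - intros V1 HV1d HV1c MV1 mV1 [HM1 _] [Hm1 _].
    assert (incr : forall tm t, tm < t ->
      mV1 * (t - tm) <= conv V f t - conv V f tm <= MV1 * (t - tm)).
    { intros tm t Ht. rewrite !convE. rewrite <- RInt_minus' by auto.
      assert (pw : forall psi, mV1 * (t - tm) <= V (t - psi) - V (tm - psi) <= MV1 * (t - tm)).
      { intros psi. destruct (MVT_gen V (tm - psi) (t - psi) V1) as [c [_ Hc]].
        - intros; apply is_derive_Reals, HV1d.
        - intros; apply HVc.
        - rewrite Hc. replace (t - psi - (tm - psi)) with (t - tm) by ring.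
          specialize (HM1 c). specialize (Hm1 c). split; nra. }
      assert (exd : ex_RInt (fun x => V (t - x) * f x - V (tm - x) * f x) 0 1).
      { apply cont_ex_RInt. intros; apply continuity_pt_minus; apply Kic. }
      split.
      - transitivity (RInt (fun psi => (mV1 * (t - tm)) * f psi) 0 1).
        + rewrite RInt_scal', mass by auto. lra.
        + apply RInt_le. lra. apply cont_ex_RInt. intros; apply continuity_pt_scal; auto.
          auto. intros psi _. specialize (pw psi). specialize (Hfnn psi). nra.
      - transitivity (RInt (fun psi => (MV1 * (t - tm)) * f psi) 0 1).
        + apply RInt_le. lra. auto. apply cont_ex_RInt. intros; apply continuity_pt_scal; auto.
          intros psi _. specialize (pw psi). specialize (Hfnn psi). nra.
        + rewrite RInt_scal', mass by auto. lra. }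
    assert (dlin : forall tm a, derivable_pt_lim (fun t => a * ((t - tm) * f t)) tm (a * f tm)).
    { intros tm a.
      replace (a * f tm) with (a * (1 * f tm + (tm - tm) * f1 tm)) by ring.
      apply (derivable_pt_lim_scal (fun t => (t - tm) * f t)).
      apply (derivable_pt_lim_mult (fun t => t - tm) f).
      - replace 1 with (1 - 0) by ring.
        apply (derivable_pt_lim_minus id (fct_cte tm)).
        apply derivable_pt_lim_id. apply derivable_pt_lim_const.
      - apply Hf1. }
    assert (dcf : forall tm a, derivable_pt_lim (fun t => a * f t) tm (a * f1 tm)).
    { intros tm a. apply (derivable_pt_lim_scal f). apply Hf1. }
    split.
    + intros tm Hmax.
      assert (f1z : f1 tm = 0).
      { assert (H := deriv_maximum f (tm - 1) (tm + 1) tm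
                  (exist _ (f1 tm) (Hf1 tm))).
        simpl in H. apply H; try lra. intros; apply Hmax. }
      assert (Hd : 0 <= conv V f tm * f1 tm + MV1 * f tm - h tm).
      { apply (deriv_nonneg (fun t => (conv V f tm * f t + MV1 * ((t - tm) * f t))
                                       - conv V f t * f t) tm).
        - apply (derivable_pt_lim_minus (fun t => conv V f tm * f t + MV1 * ((t - tm) * f t))
                                        (fun t => conv V f t * f t)).
          apply (derivable_pt_lim_plus (fun t => conv V f tm * f t) (fun t => MV1 * ((t - tm) * f t))).
          apply dcf. apply dlin. apply Hh.
        - ring.
        - intros t Ht. destruct (incr tm t Ht) as [_ B]. specialize (Hfnn t). nra. }
      rewrite f1z in Hd.
      apply (Rmult_le_reg_l D); auto.
      replace (D * (- (MV1 / D) * f tm)) with (- (MV1 * f tm)) by (field; lra).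
      specialize (Hstat tm). lra.
    + intros tm Hmin.
      assert (f1z : f1 tm = 0).
      { assert (H := deriv_minimum f (tm - 1) (tm + 1) tm
                  (exist _ (f1 tm) (Hf1 tm))).
        simpl in H. apply H; try lra. intros; apply Hmin. }
      assert (Hd : 0 <= h tm - (conv V f tm * f1 tm + mV1 * f tm)).
      { apply (deriv_nonneg (fun t => conv V f t * f t -
                     (conv V f tm * f t + mV1 * ((t - tm) * f t))) tm).
        - apply (derivable_pt_lim_minus (fun t => conv V f t * f t)
                    (fun t => conv V f tm * f t + mV1 * ((t - tm) * f t))).
          apply Hh.
          apply (derivable_pt_lim_plus (fun t => conv V f tm * f t) (fun t => mV1 * ((t - tm) * f t))).
          apply dcf. apply dlin.
        - ring.
        - intros t Ht. destruct (incr tm t Ht) as [B _]. specialize (Hfnn t). nra. }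
      rewrite f1z in Hd.
      apply (Rmult_le_reg_l D); auto.
      replace (D * (- (mV1 / D) * f tm)) with (- (mV1 * f tm)) by (field; lra).
      specialize (Hstat tm). lra.
Qed.
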